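(* For a unital commutative semiring $X$, the following are equivalent: (1) $X$ is fully elementary, upper-bound and $2$-cancellative; (2) $X$ is Frobenius and idempotent.
   Context: A semiring $(X,+,0,\cdot)$: $(X,+,0)$ commutative monoid, $(X,\cdot)$ semigroup, distributivity, $0$ absorbing. Unital: has a multiplicative unit $1$; commutative: $\cdot$ commutative; idempotent: $x+x=x$ for all $x$. Intrinsic order: $a\le b$ iff $a+x=b$ for some $x\in X$; $X$ is upper-bound if this preorder is antisymmetric. $X$ is $2$-cancellative if $x+x=y+y$ implies $x=y$. $X$ is Frobenius if $(x+y)^n=x^n+y^n$ for all $x,y\in X$ and all integers $n\ge1$. Polynomials in $n$ variables are functions $X^n\to X$ represented by formal expressions $\sum_{k=1}^m a_k\prod_{j=1}^n x_j^{d_{k,j}}$ ($a_k\in X$). A polynomial is symmetric if represented by an expression which, with each monomial $a_k\prod_j x_j^{d_{k,j}}$, contains all monomials $a_k\prod_j x_{\sigma(j)}^{d_{k,j}}$, $\sigma\in S_n$ (up to reordering factors). $e_j$ ($1\le j\le n$) is the sum of all products of $j$ distinct variables among $x_1,\dots,x_n$. $X$ is $n$-elementary if every symmetric polynomial $p$ in $n$ variables can be written as $p(x_1,\dots,x_n)=r(e_1,\dots,e_n)$ for some polynomial $r$, for all $x_i\in X$; $X$ is fully elementary if it is $n$-elementary for every $n\in\mathbb{N}$. *)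

(* Defs.v *)
From HB Require Import structures.
From mathcomp Require Import all_boot all_order all_algebra all_fingroup.
Set Implicit Arguments. Unset Strict Implicit. Unset Printing Implicit Defensive.
Import GRing.Theory.
Local Open Scope ring_scope.

(* A unital commutative semiring is a comPzSemiRingType (0 = 1 allowed). *)

(* A formal polynomial expression in n variables with coefficients in X:
   a finite list of monomials (a_k, d_k), standing for
   sum_k a_k * prod_j x_j ^ (d_k j). *)
Definition monom (X : comPzSemiRingType) (n : nat) := (X * {ffun 'I_n -> nat})%type.
Definition fpoly (X : comPzSemiRingType) (n : nat) := seq (monom X n).

Definition peval (X : comPzSemiRingType) (n : nat) (p : fpoly X n) (x : 'I_n -> X) : X :=
  \sum_(m <- p) (m.1 * \prod_(j < n) x j ^+ (m.2 j)).

Definition mperm (X : comPzSemiRingType) (n : nat) (s : 'S_n) (m : monom X n) : monom X n :=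
  (m.1, [ffun j => m.2 (s j)]).

Definition symmetric_expr (X : comPzSemiRingType) (n : nat) (p : fpoly X n) : Prop :=
  forall s : 'S_n, perm_eq p (map (mperm s) p).

Definition esym (X : comPzSemiRingType) (n j : nat) (x : 'I_n -> X) : X :=
  \sum_(A : {set 'I_n} | #|A| == j) \prod_(i in A) x i.

Definition n_elementary (X : comPzSemiRingType) (n : nat) : Prop :=
  forall p : fpoly X n, symmetric_expr p ->
  exists r : fpoly X n, forall x : 'I_n -> X,
    peval p x = peval r (fun j : 'I_n => esym (j.+1)%N x).

Definition fully_elementary (X : comPzSemiRingType) : Prop :=
  forall n : nat, n_elementary X n.

Definition intrinsic_le (X : comPzSemiRingType) (a b : X) : Prop :=
  exists x : X, a + x = b.

Definition upper_bound (X : comPzSemiRingType) : Prop :=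
  forall a b : X, intrinsic_le a b -> intrinsic_le b a -> a = b.

Definition two_cancellative (X : comPzSemiRingType) : Prop :=
  forall x y : X, x + x = y + y -> x = y.

Definition frobenius (X : comPzSemiRingType) : Prop :=
  forall (x y : X) (n : nat), (1 <= n)%N -> (x + y) ^+ n = x ^+ n + y ^+ n.

Definition idempotent_sr (X : comPzSemiRingType) : Prop :=
  forall x : X, x + x = x.

(* Main.v *)
Require Import Defs.
From HB Require Import structures.
From mathcomp Require Import all_boot all_order all_algebra all_fingroup.
From mathcomp Require Import ring zify.
Set Implicit Arguments. Unset Strict Implicit. Unset Printing Implicit Defensive.
Import GRing.Theory.
Local Open Scope ring_scope.
Section Ord.
Variable X : comPzSemiRingType.
Hypothesis idem : idempotent_sr X.
Definition lex (a b : X) := a + b = b.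

Lemma lex_refl a : lex a a. Proof. exact: idem. Qed.
Lemma lex_trans a b c : lex a b -> lex b c -> lex a c.
Proof. rewrite /lex => h1 h2; by rewrite -h2 addrA h1. Qed.
Lemma lex_addl a b : lex a (a + b).
Proof. by rewrite /lex addrA idem. Qed.
Lemma lex_addr a b : lex b (a + b).
Proof. by rewrite addrC; apply: lex_addl. Qed.
Lemma lex_add a b c : lex a c -> lex b c -> lex (a + b) c.
Proof. rewrite /lex => h1 h2; by rewrite -addrA h2 h1. Qed.
Lemma lex_mulr a b z : lex a b -> lex (a * z) (b * z).
Proof. by rewrite /lex -mulrDl => ->. Qed.
Lemma lex_mull a b z : lex a b -> lex (z * a) (z * b).
Proof. by rewrite /lex -mulrDr => ->. Qed.
Lemma lex_mul a b c d : lex a b -> lex c d -> lex (a * c) (b * d).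
Proof. move=> h1 h2; apply: (lex_trans (lex_mulr c h1)); exact: lex_mull. Qed.
Lemma lex_anti a b : lex a b -> lex b a -> a = b.
Proof. rewrite /lex => h1 h2; by rewrite -h1 addrC h2. Qed.
Lemma lex_exp a b n : lex a b -> lex (a ^+ n) (b ^+ n).
Proof. move=> h; elim: n => [|n IH]; first exact: lex_refl.
by rewrite !exprS; apply: lex_mul. Qed.
Lemma lex_sum (I : Type) (r : seq I) (P : pred I) (F : I -> X) b :
  (forall i, P i -> lex (F i) b) -> lex (\sum_(i <- r | P i) F i) b.
Proof.
move=> h; apply: (big_ind (fun v => lex v b)); first by rewrite /lex add0r.
  by move=> x y; apply: lex_add.
exact: h.
Qed.
Lemma lex_term_seq (I : eqType) (r : seq I) (F : I -> X) i :
  i \in r -> lex (F i) (\sum_(j <- r) F j).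
Proof.
elim: r => [//|a r IH]; rewrite in_cons big_cons => /orP [/eqP ->|/IH h].
  exact: lex_addl.
apply: lex_trans h _; exact: lex_addr.
Qed.
Lemma lex_term (I : finType) (P : pred I) (F : I -> X) i :
  P i -> lex (F i) (\sum_(j | P j) F j).
Proof. by move=> Pi; rewrite (bigD1 i) //=; apply: lex_addl. Qed.
End Ord.

Section Gen.
Variable X : comPzSemiRingType.
Variable n : nat.
Definition mon (x : 'I_n -> X) (f : 'I_n -> nat) := \prod_j x j ^+ f j.
Lemma mon_ext x f g : (forall l, f l = g l) -> mon x f = mon x g.
Proof. by move=> h; apply: eq_bigr => l _; rewrite h. Qed.
Lemma mon_addT x g (T : {set 'I_n}) :
  mon x (fun l => (g l + (l \in T))%N) = mon x g * \prod_(l in T) x l.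
Proof.
rewrite /mon (eq_bigr (fun l => x l ^+ g l * x l ^+ (l \in T))); last by move=> l _; rewrite exprD.
rewrite big_split /=; congr (_ * _); rewrite [RHS]big_mkcond /=.
by apply: eq_bigr => l _; case: (l \in T); rewrite ?expr1 ?expr0.
Qed.
Definition Ev (x : 'I_n -> X) := fun j : 'I_n => Defs.esym j.+1 x.
Lemma peval_mulvar (r : fpoly X n) y j :
  peval r y * y j = peval (map (fun m : monom X n => (m.1, [ffun l => (m.2 l + (l \in [set j]))%N])) r) y.
Proof.
rewrite /peval big_map mulr_suml; apply: eq_bigr => m _ /=; rewrite -mulrA; congr (_ * _).
have := mon_addT y (fun l => m.2 l) [set j]; rewrite /mon big_set1 => <-.
by apply: eq_bigr => l _; rewrite ffunE.
Qed.
Lemma peval_scale (r : fpoly X n) a y :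
  a * peval r y = peval (map (fun m : monom X n => (a * m.1, m.2)) r) y.
Proof. by rewrite /peval big_map mulr_sumr; apply: eq_bigr => m _ /=; rewrite mulrA. Qed.
Lemma peval_cat (r1 r2 : fpoly X n) y : peval (r1 ++ r2) y = peval r1 y + peval r2 y.
Proof. by rewrite /peval big_cat. Qed.
End Gen.

Section Main.
Variable X : comPzSemiRingType.
Variable n : nat.
Hypothesis idem : idempotent_sr X.
Hypothesis frob : frobenius X.
Implicit Types x : 'I_n -> X.

Definition Osum (c : 'I_n -> nat) x := \sum_(s : 'S_n) mon x (fun j => c (s j)).

Lemma frob2 (u v : X) b : lex (u * v ^+ b) (u ^+ b.+1 + v ^+ b.+1).
Proof.
rewrite -frob // exprS; apply: lex_mul; first exact: lex_addl idem _ _.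
apply: lex_exp; first exact: idem. exact: lex_addr.
Qed.

Lemma mon_split x (g : 'I_n -> nat) i j : i != j ->
  mon x g = x i ^+ g i * x j ^+ g j * \prod_(l | (l != i) && (l != j)) x l ^+ g l.
Proof.
move=> hij; rewrite /mon (bigD1 i) // (bigD1 j) /=; last by rewrite eq_sym.
by rewrite mulrA.
Qed.

Lemma swap_step x (f : 'I_n -> nat) i j : i != j -> f i = 1%N ->
  lex (mon x f)
   (mon x (fun l => if l == i then (f j).+1 else if l == j then 0%N else f l) +
    mon x (fun l => if l == i then 0%N else if l == j then (f j).+1 else f l)).
Proof.
move=> hij hfi; have hji : j != i by rewrite eq_sym.
rewrite !(mon_split _ _ hij) !eqxx ?(negbTE hij) ?(negbTE hji) hfi.
set R := \prod_(l | _) _.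
have -> : \prod_(l | (l != i) && (l != j)) x l ^+ (if l == i then (f j).+1 else if l == j then 0%N else f l) = R.
  apply: eq_bigr => l /andP [/negbTE -> /negbTE ->] //.
have -> : \prod_(l | (l != i) && (l != j)) x l ^+ (if l == i then 0%N else if l == j then (f j).+1 else f l) = R.
  apply: eq_bigr => l /andP [/negbTE -> /negbTE ->] //.
rewrite -mulrDl; apply: lex_mulr; rewrite !expr0 mulr1 mul1r expr1.
exact: frob2.
Qed.

Section Key.
Variable c : 'I_n -> nat.
Let S := [set s | (0 < c s)%N].
Let c2 := fun s => (c s).-1.
Let U (s : 'S_n) := [set l | (0 < c (s l))%N].
Let term x (s : 'S_n) (T : {set 'I_n}) := mon x (fun l => c2 (s l)) * \prod_(l in T) x l.

Lemma cardU s : #|U s| = #|S|.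
Proof.
have -> : U s = s @^-1: S by apply/setP => l; rewrite !inE.
apply: card_preimset; exact: perm_inj.
Qed.

Lemma termU x s : term x s (U s) = mon x (fun l => c (s l)).
Proof.
rewrite /term -mon_addT; apply: mon_ext => l; rewrite /c2 inE.
by case: (c (s l)) => // m; rewrite addn1.
Qed.

Lemma absorb0 x (s : 'S_n) (T : {set 'I_n}) : #|T| = #|S| -> T :\: U s = set0 -> lex (term x s T) (Osum c x).
Proof.
move=> hT h0; have -> : T = U s.
  apply/eqP; rewrite eqEcard cardU hT leqnn andbT.
  by rewrite -setD_eq0 h0.
rewrite termU; exact: (lex_term idem (fun s0 : 'S_n => mon x (fun j => c (s0 j))) (P := xpredT)).
Qed.

Lemma absorb x N : forall (s : 'S_n) (T : {set 'I_n}), #|T| = #|S| -> (#|T :\: U s| <= N)%N -> lex (term x s T) (Osum c x).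
Proof.
elim: N => [|N IH] s T hT hN.
  apply: absorb0 => //; apply/eqP; rewrite -cards_eq0 -leqn0 //.
have [h0|hne] := eqVneq (T :\: U s) set0; first exact: absorb0.
case/set0Pn: hne => i.
rewrite !inE => /andP [hiU hiT].
have [j] : exists j, j \in U s :\: T.
  apply/set0Pn; rewrite -cards_eq0.
  have h1 := cardsID (U s) T; have h2 := cardsID T (U s).
  rewrite cardU in h2; rewrite setIC in h1.
  have : (0 < #|T :\: U s|)%N by apply/card_gt0P; exists i; rewrite !inE hiU hiT.
  lia.
rewrite !inE => /andP [hjT hjU].
have hij : i != j by apply/eqP => e; move: hjT; rewrite -e hiT.
have ci0 : c (s i) = 0%N by move: hiU; rewrite lt0n negbK => /eqP.
set f := fun l => (c2 (s l) + (l \in T))%N.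
have hfi : f i = 1%N by rewrite /f /c2 ci0 hiT.
have -> : term x s T = mon x f by rewrite /term -mon_addT.
apply: (lex_trans (swap_step x hij hfi)); apply: lex_add.
  set s' := (tperm i j * s)%g.
  have -> : mon x (fun l => if l == i then (f j).+1 else if l == j then 0%N else f l) = term x s' T.
    rewrite /term -mon_addT; apply: mon_ext => l; rewrite /s' permM /f (negbTE hjT) addn0.
    case: (eqVneq l i) => [->|hli]; first by rewrite tpermL hiT addn1.
    case: (eqVneq l j) => [->|hlj]; first by rewrite tpermR (negbTE hjT) /c2 ci0.
    by rewrite tpermD // eq_sym.
  apply: IH => //.
  have hsub : T :\: U s' \subset (T :\: U s) :\ i.
    apply/subsetP => l; rewrite !inE /s' permM => /andP [hl1 hl2].
    have hli : l != i.
      apply/eqP => e; move: hl1; rewrite e tpermL; by rewrite hjU.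
    have hlj : l != j by apply/eqP => e; move: hjT; rewrite -e hl2.
    rewrite tpermD 1?eq_sym // in hl1; by rewrite hli hl1 hl2.
  have := subset_leq_card hsub; have := cardsD1 i (T :\: U s).
  rewrite !inE hiU hiT /=; move: hN => hN' hD hS; rewrite hD add1n ltnS in hN'; exact: leq_trans hS hN'.
set T' := j |: (T :\ i).
have -> : mon x (fun l => if l == i then 0%N else if l == j then (f j).+1 else f l) = term x s T'.
  rewrite /term -mon_addT; apply: mon_ext => l; rewrite /f /T' !inE (negbTE hjT) addn0.
  case: (eqVneq l i) => [->|hli]; first by rewrite (negbTE hij) /c2 ci0.
  case: (eqVneq l j) => [->|hlj] //; first by rewrite addn1.
apply: IH.
  rewrite /T' cardsU1 !inE (negbTE hjT) andbF /=.
  have := cardsD1 i T; rewrite hiT; by move=> h; rewrite -hT h.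
have hsub : T' :\: U s \subset (T :\: U s) :\ i.
  apply/subsetP => l; rewrite /T' !inE => /andP [hl1 /orP [/eqP e|/andP [hl2 hl3]]].
    by rewrite e hjU in hl1.
  by rewrite hl1 hl2 hl3.
have := subset_leq_card hsub; have := cardsD1 i (T :\: U s).
move: hN; rewrite !inE hiU hiT /=; lia.
Qed.

Lemma Ostep x : Osum c x = Osum c2 x * Defs.esym #|S| x.
Proof.
apply: (lex_anti (a := Osum c x)).
  rewrite /Osum mulr_suml; apply: lex_sum => s _.
  apply: (lex_trans (b := mon x (fun j => c2 (s j)) * Defs.esym #|S| x)); last first.
    exact: (lex_term idem (fun s0 : 'S_n => mon x (fun j => c2 (s0 j)) * Defs.esym #|S| x) (P := xpredT)).
  rewrite -termU /term; apply: lex_mull.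
  rewrite /Defs.esym; apply: (@lex_term X idem _ (fun T : {set 'I_n} => #|T| == #|S|) (fun T => \prod_(i in T) x i) (U s)); by rewrite cardU.
rewrite /Osum mulr_suml; apply: lex_sum => s _.
rewrite /Defs.esym mulr_sumr; apply: lex_sum => T /eqP hT.
exact: (absorb x (N := #|T :\: U s|)).
Qed.
End Key.
End Main.

Section Final.
Variable X : comPzSemiRingType.
Variable n : nat.
Hypothesis idem : idempotent_sr X.
Hypothesis frob : frobenius X.

Lemma Ozero (c : 'I_n -> nat) : (forall l, c l = 0%N) ->
  exists r : fpoly X n, forall x, Osum c x = peval r (Ev x).
Proof.
move=> hc; exists [:: (1, [ffun _ => 0%N])] => x.
rewrite /peval big_cons big_nil addr0 mul1r /= big1; last by move=> j _; rewrite ffunE expr0.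
have h1 : forall s : 'S_n, mon x (fun j => c (s j)) = 1.
  by move=> s; rewrite /mon big1 // => j _; rewrite hc expr0.
apply: lex_anti.
  by apply: lex_sum => s _; rewrite h1; apply: lex_refl.
rewrite -(h1 1%g).
exact: (@lex_term X idem _ xpredT (fun s : 'S_n => mon x (fun j => c (s j))) 1%g isT).
Qed.

Lemma O_expr N : forall (c : 'I_n -> nat), (\sum_l c l <= N)%N ->
  exists r : fpoly X n, forall x, Osum c x = peval r (Ev x).
Proof.
elim: N => [|N IH] c hc.
  apply: Ozero => l; apply/eqP; rewrite -leqn0; apply: leq_trans hc.
  by rewrite (bigD1 l) //= leq_addr.
have [/existsP [s hs]|hno] := boolP [exists s, (0 < c s)%N]; last first.
  apply: Ozero => l; apply/eqP; rewrite -leqn0 leqNgt; apply/negP => h.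
  by move/negP: hno; apply; apply/existsP; exists l.
have hlt : (\sum_l (c l).-1 < \sum_l c l)%N.
  rewrite (bigD1 s) // [Z in (_ < Z)%N](bigD1 s) //= -addSn; apply: leq_add.
    by rewrite prednK.
  by apply: leq_sum => l _; apply: leq_pred.
have [r2 Hr2] := IH (fun l => (c l).-1) (leq_trans (leq_trans hlt hc) (leqnn _) : _ <= N)%N.
set k := #|[set l | (0 < c l)%N]|.
have k0 : (0 < k)%N by apply/card_gt0P; exists s; rewrite inE.
have kn : (k.-1 < n)%N.
  rewrite prednK //; have := max_card (mem [set l | (0 < c l)%N]); by rewrite card_ord.
pose j0 : 'I_n := Ordinal kn.
exists (map (fun m : monom X n => (m.1, [ffun l => (m.2 l + (l \in [set j0]))%N])) r2) => x.
rewrite -peval_mulvar (Ostep idem frob) Hr2; congr (_ * _).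
by rewrite /Ev /= prednK.
Qed.
End Final.

Section Final2.
Variable X : comPzSemiRingType.
Variable n : nat.
Hypothesis idem : idempotent_sr X.
Hypothesis frob : frobenius X.

Lemma list_expr (p : fpoly X n) : exists r : fpoly X n, forall x,
  \sum_(m <- p) m.1 * Osum (fun j => m.2 j) x = peval r (Ev x).
Proof.
elim: p => [|a p [r IH]]; first by exists [::] => x; rewrite /peval !big_nil.
have [ra Ha] := O_expr idem frob (leqnn (\sum_l a.2 l)).
exists (map (fun m : monom X n => (a.1 * m.1, m.2)) ra ++ r) => x.
by rewrite big_cons peval_cat -peval_scale Ha IH.
Qed.

Lemma sym_decomp (p : fpoly X n) : symmetric_expr p -> forall x,
  peval p x = \sum_(m <- p) m.1 * Osum (fun j => m.2 j) x.
Proof.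
move=> Hs x; apply: lex_anti.
  rewrite /peval big_seq; apply: lex_sum => m hm.
  apply: (lex_trans _ (@lex_term_seq X idem _ p (fun m : monom X n => m.1 * Osum (fun j => m.2 j) x) m hm)).
  apply: lex_mull.
  have := @lex_term X idem _ xpredT (fun s : 'S_n => mon x (fun j => m.2 (s j))) 1%g isT.
  by rewrite (@mon_ext _ _ x (fun j => m.2 ((1%g : 'S_n) j)) (fun j => m.2 j)) // => j; rewrite perm1.
rewrite big_seq; apply: lex_sum => m hm; rewrite /Osum mulr_sumr; apply: lex_sum => s _.
have hin : mperm s m \in p by rewrite (perm_mem (Hs s)) map_f.
have := @lex_term_seq X idem _ p (fun m : monom X n => m.1 * \prod_j x j ^+ m.2 j) _ hin.
rewrite /= /mon; congr lex; congr (_ * _); apply: eq_bigr => j _; by rewrite ffunE.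
Qed.
End Final2.

Lemma dir21 (X : comPzSemiRingType) : frobenius X -> idempotent_sr X ->
  fully_elementary X /\ upper_bound X /\ two_cancellative X.
Proof.
move=> frob idem; split; [|split].
- move=> n p Hs; have [r Hr] := list_expr idem frob p.
  exists r => x; rewrite (sym_decomp idem Hs) Hr //.
- move=> a b [u hu] [v hv]; apply: lex_anti.
    by rewrite /lex -hu addrA idem.
  by rewrite /lex -hv addrA idem.
- by move=> x y; rewrite !idem.
Qed.

Section S.
Variable X : comPzSemiRingType.
Definition o1 : 'I_2 := @Ordinal 2 1 isT.
Lemma prod2 (F : 'I_2 -> X) : \prod_(j < 2) F j = F ord0 * F o1.
Proof. rewrite !big_ord_recl big_ord0 mulr1; congr (_ * F _); exact: val_inj. Qed.
Lemma esym22 (x : 'I_2 -> X) : Defs.esym 2 x = x ord0 * x o1.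
Proof.
rewrite /Defs.esym (bigD1 setT) /=; last by rewrite cardsT card_ord.
rewrite [Z in _ + Z]big1 ?addr0.
  rewrite (eq_bigl xpredT); [exact: prod2 | by move=> i; rewrite inE].
move=> A /andP [h1 h2]; exfalso; move/negP: h2; apply.
by rewrite eqEcard subsetT cardsT card_ord (eqP h1).
Qed.
Lemma esym21 (x : 'I_2 -> X) : Defs.esym 1 x = x ord0 + x o1.
Proof.
rewrite /Defs.esym (eq_bigl (fun A => A \in [set [set i] | i : 'I_2])); last first.
  move=> A; apply/cards1P/imsetP => [[i ->]|[i _ ->]]; by exists i.
rewrite big_imset /=; last by move=> i j _ _; apply: set1_inj.
rewrite (eq_bigr (fun i => x i)); last by move=> i _; rewrite big_set1.
rewrite (eq_bigl xpredT); last by move=> i; rewrite inE.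
rewrite !big_ord_recl big_ord0 addr0; congr (_ + x _); exact: val_inj.
Qed.
Lemma I2 (j : 'I_2) : j = ord0 \/ j = o1.
Proof. case: j => [[|[|m]] h]; [left|right|by []]; exact: val_inj. Qed.

Definition v2 (u v : X) : 'I_2 -> X := fun j => if j == ord0 then u else v.
Definition expo (a b : nat) : {ffun 'I_2 -> nat} := [ffun j => if j == ord0 then a else b].

Lemma mperm2 (s : 'S_2) (c : X) a b :
  mperm s (c, expo a b) = (c, if s ord0 == ord0 then expo a b else expo b a).
Proof.
rewrite /mperm /=; congr pair; apply/ffunP => j; rewrite !ffunE.
have hs : s o1 = if s ord0 == ord0 then o1 else ord0.
  case: (I2 (s ord0)) => h0; rewrite h0 /=.
    case: (I2 (s o1)) => // h1; rewrite -h1 in h0; by move/perm_inj: h0.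
  case: (I2 (s o1)) => // h1; rewrite -h1 in h0; by move/perm_inj: h0.
case: (I2 j) => ->; case: (I2 (s ord0)) => h0; rewrite ?hs h0 //= ffunE //.
Qed.

Lemma peval_ext n (r : fpoly X n) (x y : 'I_n -> X) :
  (forall j, x j = y j) -> peval r x = peval r y.
Proof. move=> h; apply: eq_bigr => m _; congr (_ * _); apply: eq_bigr => j _; by rewrite h. Qed.

Definition pk (k : nat) : fpoly X 2 := [:: (1, expo k 0); (1, expo 0 k)].

Lemma pk_sym k : symmetric_expr (pk k).
Proof.
move=> s; rewrite /pk /= !mperm2; case: (s ord0 == ord0) => //.
by rewrite (perm_catC [:: _]) /=.
Qed.

Lemma pk_eval k u v : peval (pk k) (v2 u v) = u ^+ k + v ^+ k.
Proof.
rewrite /peval /pk !big_cons big_nil !prod2 /v2 /= !ffunE /=.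
by rewrite !expr0 !mul1r !mulr1 addr0.
Qed.

Lemma Gsplit (r : fpoly X 2) s q :
  exists t, peval r (v2 s q) = peval r (v2 s 0) + t.
Proof.
exists (\sum_(i <- r | i.2 o1 != 0%N) i.1 * \prod_(j < 2) v2 s q j ^+ i.2 j).
rewrite /peval (bigID (fun m : monom X 2 => m.2 o1 == 0%N)) /=.
rewrite [Z in _ = Z + _](bigID (fun m : monom X 2 => m.2 o1 == 0%N)) /=.
rewrite [Z in _ = _ + Z + _]big1 ?addr0; last first.
  move=> m hm; rewrite prod2 /v2 /= expr0n (negbTE hm) /= mulr0 mulr0 //.
congr (_ + _); apply: eq_bigr => m /eqP hm; by rewrite !prod2 /v2 /= hm !expr0.
Qed.

Lemma binom_ex (x y : X) n : exists z, (x + y) ^+ n.+1 = x ^+ n.+1 + y ^+ n.+1 + z.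
Proof.
elim: n => [|n [z IH]]; first by exists 0; rewrite !expr1 addr0.
exists (x * y ^+ n.+1 + y * x ^+ n.+1 + (x + y) * z).
rewrite exprS IH [x ^+ n.+2]exprS [y ^+ n.+2]exprS; ring.
Qed.

Lemma dir12 : fully_elementary X -> upper_bound X -> two_cancellative X ->
  frobenius X /\ idempotent_sr X.
Proof.
move=> FE UB TC.
have frob : frobenius X.
  move=> x y [//|k] _.
  have [r Hr] := FE 2%N (pk k.+1) (pk_sym k.+1).
  have e1 := Hr (v2 x y); have e2 := Hr (v2 (x + y) 0).
  rewrite pk_eval in e1; rewrite pk_eval expr0n /= addr0 in e2.
  have E1 : peval r (fun j : 'I_2 => Defs.esym j.+1 (v2 x y)) = peval r (v2 (x + y) (x * y)).
    apply: peval_ext => j; case: (I2 j) => ->; [exact: esym21 | exact: esym22].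
  have E2 : peval r (fun j : 'I_2 => Defs.esym j.+1 (v2 (x + y) 0)) = peval r (v2 (x + y) 0).
    apply: peval_ext => j; case: (I2 j) => ->.
      by rewrite esym21 /v2 /= addr0.
    by rewrite esym22 /v2 /= mulr0.
  rewrite E1 in e1; rewrite E2 in e2.
  have [t Ht] := Gsplit r (x + y) (x * y).
  have [z Hz] := binom_ex x y k.
  apply: UB; first by exists t; rewrite e2 -Ht -e1.
  by exists z; rewrite Hz.
split => //.
have h1 : (1 + 1 : X) = 1.
  apply: TC; have := frob 1 1 2%N isT; rewrite expr1n.
  have -> : ((1 + 1 : X) ^+ 2 = (1 + 1) + (1 + 1)) by ring.
  by [].
move=> x; have -> : x + x = x * (1 + 1) by ring.
by rewrite h1 mulr1.
Qed.
End S.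

Theorem theorem4p6 (X : comPzSemiRingType) :
  (fully_elementary X /\ upper_bound X /\ two_cancellative X) <->
  (frobenius X /\ idempotent_sr X).
Proof.
split.
  by case=> FE [UB TC]; apply: dir12.
by case=> F I; apply: dir21.
Qed.
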